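(* Let $a,b,c\ge 0$ and let $I=I_{L(a,b,c)}\subseteq Q$ be the edge ideal of the graph $L(a,b,c)$. For every total order $<$ on $G(I)$ in which $xy$ is the least element, the Lyubeznik resolution $\mathbb{L}_<$ is the minimal $Q$-free resolution of $Q/I$.
   Context: $L(a,b,c)$ is the graph with vertex set $\{x,y\}\cup\{x_i\}_{i=1}^a\cup\{y_j\}_{j=1}^b\cup\{z_k\}_{k=1}^c$ and edges $\{x,y\}$, $\{x,x_i\}$ ($1\le i\le a$), $\{y,y_j\}$ ($1\le j\le b$), $\{x,z_k\},\{y,z_k\}$ ($1\le k\le c$). $Q$ is the polynomial ring over a field $\Bbbk$ in these vertices as variables, and the edge ideal is generated by the products of the endpoints of the edges. For a monomial ideal $I$ with minimal generating set $G(I)$, $m_U=\mathrm{lcm}(U)$ for $U\subseteq G(I)$, the Taylor resolution $\mathbb{T}$ has basis $e_U$ ($U\subseteq G(I)$, $|U|=i$ in degree $i$) and differential $\partial(e_U)=\sum_{u\in U}(-1)^{|\{v\in U:v<u\}|}\frac{m_U}{m_{U\setminus\{u\}}}e_{U\setminus\{u\}}$. For a total order $<$ on $G(I)$, the Lyubeznik resolution $\mathbb{L}_<$ is the subcomplex of $\mathbb{T}$ spanned by those $e_U$, $U=\{u_{i_1}<\cdots<u_{i_s}\}$, such that for every $t<s$ and every generator $u_q<u_{i_t}$, $u_q$ does not divide $\mathrm{lcm}(u_{i_t},u_{i_{t+1}},\ldots,u_{i_s})$; it is a free resolution of $Q/I$. *)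

(* Defs.v *)
From HB Require Import structures.
From mathcomp Require Import all_boot all_order all_algebra.
From mathcomp Require Import finmap.
From mathcomp Require Import mpoly.

Set Implicit Arguments.
Unset Strict Implicit.
Unset Printing Implicit Defensive.

Import GRing.Theory.
Local Open Scope fset_scope.
Local Open Scope ring_scope.

Section LGraph.
Variables (a b c : nat).

Definition nv : nat := (a + b + c).+2.

(* Vertex indexing (0-based): x = 0, y = 1, x_i = 2+i, y_j = 2+a+j,
   z_k = 2+a+b+k. *)
Definition vx : 'I_nv := @inord (a + b + c).+1 0.
Definition vy : 'I_nv := @inord (a + b + c).+1 1.
Definition vxi (i : 'I_a) : 'I_nv := @inord (a + b + c).+1 (2 + i).
Definition vyj (j : 'I_b) : 'I_nv := @inord (a + b + c).+1 (2 + a + j).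
Definition vzk (k : 'I_c) : 'I_nv := @inord (a + b + c).+1 (2 + a + b + k).

Definition Ledges : seq ('I_nv * 'I_nv) :=
  (vx, vy) :: [seq (vx, vxi i) | i <- enum 'I_a]
           ++ [seq (vy, vyj j) | j <- enum 'I_b]
           ++ [seq (vx, vzk k) | k <- enum 'I_c]
           ++ [seq (vy, vzk k) | k <- enum 'I_c].

Definition edge_mon (e : 'I_nv * 'I_nv) : 'X_{1..nv} :=
  (mnm1 e.1 + mnm1 e.2)%MM.

(* G(I): the minimal generating set of the edge ideal I_{L(a,b,c)},
   i.e. the edge monomials (given by their exponent vectors). *)
Definition GI : {fset 'X_{1..nv}} := [fset edge_mon e | e in Ledges].

Definition mxy : 'X_{1..nv} := edge_mon (vx, vy).

Definition mlcmU (U : {fset 'X_{1..nv}}) : 'X_{1..nv} :=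
  \big[@mlcm nv/0%MM]_(v <- U) v.

Definition total_order_on (S : {fset 'X_{1..nv}}) (lt : rel 'X_{1..nv}) : Prop :=
  [/\ {in S, forall u, ~~ lt u u},
      {in S &, forall u v, u != v -> lt u v || lt v u} &
      {in S & S & S, forall u v w, lt u v -> lt v w -> lt u w}].

(* Lyubeznik sets: U = {u_{i_1} < ... < u_{i_s}} subset of G(I) such that
   for every t < s (i.e. u = u_{i_t} is not the largest element of U) and
   every generator q < u_{i_t}, q does not divide
   lcm(u_{i_t}, u_{i_{t+1}}, ..., u_{i_s}). *)
Definition lyubeznik (lt : rel 'X_{1..nv}) (U : {fset 'X_{1..nv}}) : bool :=
  (U `<=` GI) &&
  all (fun u => has (lt u) U ==>
         all (fun q => lt q u ==>
                ~~ (q <= mlcmU [fset v in U | (v == u) || lt u v])%MM) GI) U.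

Variable k : fieldType.

(* Coefficient of e_V in the Taylor differential of e_U:
   sum over u in U with V = U \ {u} of
   (-1)^{|{v in U : v < u}|} (m_U / m_{U \ u}). *)
Definition taylor_coef (lt : rel 'X_{1..nv}) (U V : {fset 'X_{1..nv}})
    : {mpoly k[nv]} :=
  \sum_(u <- U | V == U `\ u)
     ((-1) ^+ #|` [fset v in U | lt v u]|) *:
       'X_[(mlcmU U - mlcmU (U `\ u))%MM].

Definition in_max_ideal (p : {mpoly k[nv]}) : Prop :=
  exists q : 'I_nv -> {mpoly k[nv]}, p = \sum_(i < nv) 'X_i * q i.

(* The Lyubeznik resolution L_< (a free resolution of Q/I, with basis the
   e_U for Lyubeznik sets U and differential the restriction of the Taylor
   differential) is minimal: its differential maps L_< into m L_<, i.e.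
   every matrix entry of the differential lies in m. *)
Definition lyubeznik_minimal (lt : rel 'X_{1..nv}) : Prop :=
  forall U V : {fset 'X_{1..nv}}, lyubeznik lt U -> lyubeznik lt V ->
    in_max_ideal (taylor_coef lt U V).

End LGraph.

(* Main.v *)
Require Import Defs.
From HB Require Import structures.
From mathcomp Require Import all_boot all_order all_algebra.
From mathcomp Require Import finmap.
From mathcomp Require Import mpoly.
From mathcomp Require Import zify.

Set Implicit Arguments.
Unset Strict Implicit.
Unset Printing Implicit Defensive.

Import GRing.Theory.
Local Open Scope fset_scope.

Section S.
Variables (a b c : nat).
Local Notation N := (nv a b c).
Local Notation vx := (vx a b c).
Local Notation vy := (vy a b c).
Local Notation vxi := (@Defs.vxi a b c).
Local Notation vyj := (@Defs.vyj a b c).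
Local Notation vzk := (@Defs.vzk a b c).
Local Notation GI := (GI a b c).
Local Notation mxy := (mxy a b c).
Local Notation edge_mon := (@Defs.edge_mon a b c).
Local Notation mlcmU := (@Defs.mlcmU a b c).

Lemma val_vx : val vx = 0%N. Proof. by rewrite /Defs.vx /= inordK. Qed.
Lemma val_vy : val vy = 1%N. Proof. by rewrite /Defs.vy /= inordK. Qed.
Lemma val_vxi i : val (vxi i) = (2 + i)%N.
Proof. rewrite /Defs.vxi /= inordK //; have := ltn_ord i; lia. Qed.
Lemma val_vyj i : val (vyj i) = (2 + a + i)%N.
Proof. rewrite /Defs.vyj /= inordK //; have := ltn_ord i; lia. Qed.
Lemma val_vzk i : val (vzk i) = (2 + a + b + i)%N.
Proof. rewrite /Defs.vzk /= inordK //; have := ltn_ord i; lia. Qed.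

Lemma edge_monE e j : edge_mon e j = ((e.1 == j) + (e.2 == j))%N.
Proof. by rewrite /Defs.edge_mon mnmDE !mnm1E. Qed.

Lemma edge_pos e j : (0 < edge_mon e j)%N -> e.1 = j \/ e.2 = j.
Proof.
rewrite edge_monE; case: eqP => [->|_]; first by left.
by case: eqP => [->|_]; [right|].
Qed.

Lemma LedgesP e : e \in Ledges a b c ->
  e = (vx, vy) \/ (exists i, e = (vx, vxi i)) \/ (exists j, e = (vy, vyj j)) \/
      (exists l, e = (vx, vzk l)) \/ (exists l, e = (vy, vzk l)).
Proof.
rewrite /Ledges inE => /orP[/eqP->|]; first by left.
rewrite !mem_cat => /or4P [] /mapP [i _ ->].
- by right; left; exists i.
- by right; right; left; exists i.
- by right; right; right; left; exists i.
- by right; right; right; right; exists i.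
Qed.

Lemma GIP (v : 'X_{1..N}) : v \in GI -> exists2 e, e \in Ledges a b c & v = edge_mon e.
Proof. by move/imfsetP. Qed.

Ltac vs H := move/(congr1 val): H;
  rewrite ?val_vx ?val_vy ?val_vxi ?val_vyj ?val_vzk => H.

Ltac ordb := try (have := ltn_ord i; intro); try (have := ltn_ord i'; intro).

Lemma GI_x (v : 'X_{1..N}) : v \in GI -> (0 < v vx)%N -> (0 < v vy)%N -> v = mxy.
Proof.
move=> /GIP [e /LedgesP [->|[[i ->]|[[i ->]|[[i ->]|[i ->]]]]] ->] //=
  /edge_pos [] /= H1 /edge_pos [] /= H2; vs H1; vs H2; ordb; exfalso; lia.
Qed.

Lemma GI_xi (v : 'X_{1..N}) i : v \in GI -> (0 < v (vxi i))%N -> v = edge_mon (vx, vxi i).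
Proof.
move=> /GIP [e /LedgesP [->|[[i' ->]|[[i' ->]|[[i' ->]|[i' ->]]]]] ->] //=
  /edge_pos [] /= H1; vs H1; ordb; try (exfalso; lia).
by have -> : i' = i by apply/val_inj => /=; lia.
Qed.

Lemma GI_yj (v : 'X_{1..N}) i : v \in GI -> (0 < v (vyj i))%N -> v = edge_mon (vy, vyj i).
Proof.
move=> /GIP [e /LedgesP [->|[[i' ->]|[[i' ->]|[[i' ->]|[i' ->]]]]] ->] //=
  /edge_pos [] /= H1; vs H1; ordb; try (exfalso; lia).
by have -> : i' = i by apply/val_inj => /=; lia.
Qed.

Lemma GI_zk (v : 'X_{1..N}) i : v \in GI -> (0 < v (vzk i))%N ->
  v = edge_mon (vx, vzk i) \/ v = edge_mon (vy, vzk i).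
Proof.
move=> /GIP [e /LedgesP [->|[[i' ->]|[[i' ->]|[[i' ->]|[i' ->]]]]] ->] //=
  /edge_pos [] /= H1; vs H1; ordb; try (exfalso; lia).
- by left; have -> : i' = i by apply/val_inj => /=; lia.
- by right; have -> : i' = i by apply/val_inj => /=; lia.
Qed.

Lemma zk_neq_mxy p i : p = vx \/ p = vy -> edge_mon (p, vzk i) != mxy.
Proof.
move=> hp; apply/eqP => E; have := congr1 (fun m : 'X_{1..N} => m (vzk i)) E.
rewrite /mxy !edge_monE /= eqxx.
have h1 : (vx == vzk i) = false by apply/eqP => H; vs H; lia.
have h2 : (vy == vzk i) = false by apply/eqP => H; vs H; lia.
by rewrite h1 h2; case: hp => ->; rewrite ?h1 ?h2.
Qed.

Lemma lem_mxy (m : 'X_{1..N}) : (0 < m vx)%N -> (0 < m vy)%N -> (mxy <= m)%MM.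
Proof.
move=> h1 h2; apply/mnm_lepP => j; rewrite /mxy edge_monE /=.
have nxy : (vy == vx) = false by apply/eqP => H; vs H.
case: (eqVneq vx j) => [<-|nx]; first by rewrite nxy addn0.
by case: (eqVneq vy j) => [<-|ny].
Qed.

Lemma bigl_ge (s : seq 'X_{1..N}) v j : v \in s ->
  (v j <= (\big[@mlcm N/0%MM]_(w <- s) w) j)%N.
Proof.
elim: s => // x s IH; rewrite inE big_cons /mlcm mnmE => /orP[/eqP->|/IH h].
- exact: leq_maxl.
- exact: leq_trans h (leq_maxr _ _).
Qed.

Lemma bigl_pos (s : seq 'X_{1..N}) j :
  (0 < (\big[@mlcm N/0%MM]_(w <- s) w) j)%N -> exists2 v, v \in s & (0 < v j)%N.
Proof.
elim: s => [|x s IH]; first by rewrite big_nil mnm0E.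
rewrite big_cons /mlcm mnmE.
case: (posnP (x j)) => [E|P]; last by exists x; rewrite ?inE ?eqxx.
by rewrite E max0n => /IH [v vs pv]; exists v => //; rewrite inE vs orbT.
Qed.

Lemma mlcmU_ge (S : {fset 'X_{1..N}}) v j : v \in S -> (v j <= mlcmU S j)%N.
Proof. exact: bigl_ge. Qed.

Lemma mlcmU_pos (S : {fset 'X_{1..N}}) j :
  (0 < mlcmU S j)%N -> exists2 v, v \in S & (0 < v j)%N.
Proof. exact: bigl_pos. Qed.

Variable lt : rel 'X_{1..N}.
Hypothesis TO : total_order_on GI lt.
Hypothesis Hmin : forall u, u \in GI -> u != mxy -> lt mxy u.

Lemma mxyG : mxy \in GI.
Proof. by apply/imfsetP; exists (vx, vy) => //; rewrite /Ledges inE eqxx. Qed.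

Lemma lyubG U : lyubeznik lt U -> {subset U <= GI}.
Proof. by case/andP => /fsubsetP. Qed.

Lemma lyubA U t s : lyubeznik lt U -> t \in U -> s \in U -> t != mxy -> lt t s ->
  ~~ (mxy <= mlcmU [fset v in U | (v == t) || lt t v])%MM.
Proof.
move=> LU tU sU tn ts; have tG := lyubG LU tU.
case/andP: LU => _ /allP /(_ t tU) /implyP.
have -> : has (lt t) U by apply/hasP; exists s.
move=> /(_ isT) /allP H; have := H mxy mxyG; move/implyP; apply.
exact: (Hmin tG tn).
Qed.

Lemma lyubB U v1 v2 : lyubeznik lt U -> v1 \in U -> v2 \in U ->
  v1 != mxy -> v2 != mxy -> v1 != v2 -> (0 < v1 vx)%N -> (0 < v2 vy)%N -> False.
Proof.
move=> LU u1 u2 n1 n2 n12 p1 p2.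
case: TO => _ tot _.
have := tot _ _ (lyubG LU u1) (lyubG LU u2) n12 => /orP [h|h].
- move: (lyubA LU u1 u2 n1 h) => /negP; apply; apply: lem_mxy.
  + apply: leq_trans p1 _; apply: mlcmU_ge; by rewrite !inE /= eqxx andbT.
  + apply: leq_trans p2 _; apply: mlcmU_ge; by rewrite !inE /= h orbT andbT.
- move: (lyubA LU u2 u1 n2 h) => /negP; apply; apply: lem_mxy.
  + apply: leq_trans p1 _; apply: mlcmU_ge; by rewrite !inE /= h orbT andbT.
  + apply: leq_trans p2 _; apply: mlcmU_ge; by rewrite !inE /= eqxx andbT.
Qed.

Lemma key U u : lyubeznik lt U -> u \in U -> ~~ (u <= mlcmU (U `\ u))%MM.
Proof.
move=> LU uU; apply/negP => /mnm_lepP H.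
have uG := lyubG LU uU.
have ex j : (0 < u j)%N -> exists2 v, v \in U & v != u /\ (0 < v j)%N.
  move=> pj; move: (leq_trans pj (H j)) => /mlcmU_pos [v].
  by rewrite in_fsetD1 => /andP [vn vU] pv; exists v.
case/GIP: (uG) => e /LedgesP [E|[[i E]|[[i E]|[[i E]|[i E]]]]] Eu; subst e.
- have umxy : u = mxy by rewrite Eu.
  case: (ex vx) => [|v1 v1U [n1 p1]]; first by rewrite Eu edge_monE eqxx.
  case: (ex vy) => [|v2 v2U [n2 p2]]; first by rewrite Eu edge_monE eqxx addn1.
  rewrite umxy in n1 n2.
  case: (eqVneq v1 v2) => [E|n12].
  + subst v2; by move/eqP: n1; apply; apply: GI_x => //; apply: lyubG v1U.
  + exact: (lyubB LU v1U v2U n1 n2 n12 p1 p2).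
- case: (ex (vxi i)) => [|v vU [n p]]; first by rewrite Eu edge_monE eqxx addn1.
  by move/eqP: n; apply; rewrite Eu; apply: GI_xi p; apply: lyubG vU.
- case: (ex (vyj i)) => [|v vU [n p]]; first by rewrite Eu edge_monE eqxx addn1.
  by move/eqP: n; apply; rewrite Eu; apply: GI_yj p; apply: lyubG vU.
- case: (ex (vzk i)) => [|v vU [n p]]; first by rewrite Eu edge_monE eqxx addn1.
  case: (GI_zk (lyubG LU vU) p) => Ev; first by move/eqP: n; apply; rewrite Eu.
  apply: (lyubB LU uU vU _ _ _ _ _).
  + by rewrite Eu; apply: zk_neq_mxy; left.
  + by rewrite Ev; apply: zk_neq_mxy; right.
  + by rewrite eq_sym.
  + by rewrite Eu edge_monE eqxx.
  + by rewrite Ev edge_monE eqxx.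
- case: (ex (vzk i)) => [|v vU [n p]]; first by rewrite Eu edge_monE eqxx addn1.
  case: (GI_zk (lyubG LU vU) p) => Ev; last by move/eqP: n; apply; rewrite Eu.
  apply: (lyubB LU vU uU _ _ _ _ _).
  + by rewrite Ev; apply: zk_neq_mxy; left.
  + by rewrite Eu; apply: zk_neq_mxy; right.
  + exact: n.
  + by rewrite Ev edge_monE eqxx.
  + by rewrite Eu edge_monE eqxx.
Qed.

End S.

Theorem mainTheorem2 (k : fieldType) (a b c : nat)
    (lt : rel 'X_{1..nv a b c}) :
  total_order_on (GI a b c) lt ->
  (forall u, u \in GI a b c -> u != mxy a b c -> lt (mxy a b c) u) ->
  lyubeznik_minimal k lt.
Proof.
move=> TO Hmin U V LU LV; rewrite /taylor_coef big_seq_cond.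
apply: (big_ind (in_max_ideal (k:=k) (a:=a) (b:=b) (c:=c))).
- by exists (fun _ => 0%R); rewrite big1 // => i _; rewrite GRing.mulr0.
- move=> p q [fp ->] [fq ->]; exists (fun i => (fp i + fq i)%R).
  by rewrite -big_split /=; apply: eq_bigr => i _; rewrite GRing.mulrDr.
move=> u /andP [uU _].
set d := (@mlcmU a b c U - @mlcmU a b c (U `\ u))%MM.
case: (pickP (fun i => 0 < d i)%N) => [i hi | h0]; last first.
  exfalso; move: (key TO Hmin LU uU) => /negP; apply.
  apply/mnm_lepP => j; apply: leq_trans (mlcmU_ge _ uU) _.
  by have := h0 j; rewrite /d mnmBE /= subn_gt0 => /negbT; rewrite -leqNgt.
set cc := ((-1) ^+ _ : k)%R.
exists (fun j => if j == i then (cc *: 'X_[(d - U_(i))%MM])%R else 0%R).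
rewrite (bigD1 i) //= eqxx big1 => [|j /negbTE ->]; last by rewrite GRing.mulr0.
rewrite GRing.addr0 -GRing.scalerAr -mpolyXD addmC submK //.
by rewrite lep1mP -lt0n.
Qed.
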